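(* Let $\mathbb{F}\in\{\mathbb{R},\mathbb{C}\}$, let $F=\{f_i\}_{i=1}^n$ be a $2_c$-uniform $(n,k)$-frame in $\mathbb{F}^k$ with analysis operator $V$, and let $Q$ be its Seidel matrix, i.e. the $n\times n$ matrix with $VV^*=\frac{k}{n}I_n+c_{n,k}Q$, where $c_{n,k}=\sqrt{\frac{k(n-k)}{n^2(n-1)}}$. Then for every $1\le m\le n$, $$e_m^{\infty}(F)\le \frac{k}{n}+(m-1)c_{n,k},$$ with equality if and only if some $m\times m$ principal submatrix $Q_m$ of $Q$ (obtained by keeping the same set of $m$ rows and columns) is switching equivalent to $J_m-I_m$, where $J_m$ is the $m\times m$ all-ones matrix.
   Context: An $(n,k)$-frame is a Parseval frame $\{f_i\}_{i=1}^n$ for $\mathbb{F}^k$; its analysis operator $V:\mathbb{F}^k\to\mathbb{F}^n$, $Vx=(\langle x,f_i\rangle)_{i=1}^n$, is an isometry. Let $\mathcal{D}_m$ be the set of $n\times n$ diagonal matrices with exactly $m$ diagonal entries equal to $1$ and the rest $0$, and $e_m^{\infty}(F)=\max\{\|V^*DV\|: D\in\mathcal{D}_m\}$ (operator norm). $F$ is called $m$-uniform if $\|V^*DV\|$ is the same for all $D\in\mathcal{D}_m$, and $m_c$-uniform if it is $\ell$-uniform for every $\ell=1,\dots,m$; a $2_c$-uniform $(n,k)$-frame is exactly an equiangular Parseval frame, and for it $VV^*=\frac{k}{n}I+c_{n,k}Q$ with $Q$ a Seidel matrix. A Seidel matrix is a self-adjoint $n\times n$ matrix with zero diagonal and off-diagonal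 entries of modulus $1$. Two Seidel matrices $Q,S$ are switching equivalent if $Q=PDSD^{-1}P^{-1}$ for some permutation matrix $P$ and some diagonal matrix $D$ whose diagonal entries have modulus $1$. *)

(* Defs.v *)
From HB Require Import structures.
From mathcomp Require Import all_boot all_order all_algebra all_fingroup.
From mathcomp Require Import complex.
From mathcomp Require Import boolp classical_sets reals.
Set Implicit Arguments. Unset Strict Implicit. Unset Printing Implicit Defensive.
Import Order.TTheory GRing.Theory Num.Theory.
Local Open Scope ring_scope.
Local Open Scope classical_set_scope.

(* The scalar field F is encoded by a boolean [b]:
   b = true  : F = C = R[i];
   b = false : F = R, viewed inside R[i] as the elements with zero
               imaginary part. *)
Definition inF (R : realType) (b : bool) (z : R[i]) : bool := b || (z \is Num.real).

Definition vecF (R : realType) (b : bool) (k : nat) (x : 'cV[R[i]]_k) : bool :=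
  [forall i, inF b (x i 0)].

Definition vnorm (R : realType) (k : nat) (x : 'cV[R[i]]_k) : R :=
  Num.sqrt (\sum_(i < k) ((complex.Re (x i 0)) ^+ 2 + (complex.Im (x i 0)) ^+ 2)).

Definition opnorm (R : realType) (b : bool) (k : nat) (A : 'M[R[i]]_k) : R :=
  sup [set vnorm (A *m x) | x in [set x | vecF b x /\ vnorm x <= 1]].

Definition adj (R : realType) (m n : nat) (A : 'M[R[i]]_(m, n)) : 'M[R[i]]_(n, m) :=
  (map_mx Num.conj A)^T.

(* analysis operator: (V x)_i = <x, f_i> = sum_j x_j conj(f_i j) *)
Definition analysis (R : realType) (n k : nat) (f : 'I_n -> 'cV[R[i]]_k) : 'M[R[i]]_(n, k) :=
  \matrix_(i < n, j < k) Num.conj (f i j 0).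

(* {f_i} is an (n,k)-frame, i.e. a Parseval frame for F^k (V is an isometry) *)
Definition parseval_frame (R : realType) (b : bool) (n k : nat)
    (f : 'I_n -> 'cV[R[i]]_k) : Prop :=
  (forall i, vecF b (f i)) /\ adj (analysis f) *m analysis f = 1%:M.

Definition diagS (R : realType) (n : nat) (S : {set 'I_n}) : 'M[R[i]]_n :=
  diag_mx (\row_(i < n) (i \in S)%:R).

Definition Dnorm (R : realType) (b : bool) (n k : nat) (f : 'I_n -> 'cV[R[i]]_k)
    (S : {set 'I_n}) : R :=
  opnorm b (adj (analysis f) *m diagS R S *m analysis f).

Definition e_inf (R : realType) (b : bool) (n k : nat) (f : 'I_n -> 'cV[R[i]]_k)
    (m : nat) : R :=
  \big[Num.max/0]_(S : {set 'I_n} | #|S| == m) Dnorm b f S.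

Definition uniform (R : realType) (b : bool) (n k : nat) (f : 'I_n -> 'cV[R[i]]_k)
    (m : nat) : Prop :=
  forall S1 S2 : {set 'I_n}, #|S1| = m -> #|S2| = m -> Dnorm b f S1 = Dnorm b f S2.

Definition uniform_c (R : realType) (b : bool) (n k : nat) (f : 'I_n -> 'cV[R[i]]_k)
    (m : nat) : Prop :=
  forall l, (1 <= l <= m)%N -> uniform b f l.

Definition cnk (R : realType) (n k : nat) : R :=
  Num.sqrt ((k * (n - k))%:R / (n ^ 2 * (n - 1))%:R).

Definition seidel (R : realType) (n : nat) (Q : 'M[R[i]]_n) : Prop :=
  adj Q = Q /\ (forall i, Q i i = 0) /\ (forall i j, i != j -> `|Q i j| = 1).

Definition switching_equiv (R : realType) (m : nat) (Q S : 'M[R[i]]_m) : Prop :=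
  exists (p : 'S_m) (d : 'rV[R[i]]_m),
    (forall i, `|d 0 i| = 1) /\
    Q = perm_mx p *m diag_mx d *m S *m invmx (diag_mx d) *m invmx (perm_mx p).

Definition principal_sub (R : realType) (n m : nat) (Q : 'M[R[i]]_n) (s : 'I_m -> 'I_n)
  : 'M[R[i]]_m := \matrix_(i < m, j < m) Q (s i) (s j).

Definition JmI (R : realType) (m : nat) : 'M[R[i]]_m := const_mx 1 - 1%:M.

(* Main.v *)
Require Import Defs.
From HB Require Import structures.
From mathcomp Require Import all_boot all_order all_algebra all_fingroup.
From mathcomp Require Import complex.
From mathcomp Require Import boolp classical_sets reals.
From mathcomp Require Import ring lra.
Import Order.TTheory GRing.Theory Num.Theory.
Local Open Scope ring_scope.

Set Implicit Arguments. Unset Strict Implicit. Unset Printing Implicit Defensive.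

Section Gen.
Variable R : realType.
Local Notation C := R[i].
Local Notation RC := (real_complex R).

Lemma adjE m n (A : 'M[C]_(m,n)) i j : adj A i j = (A j i)^*.
Proof. by rewrite /adj !mxE. Qed.

Lemma adjM m n p (A : 'M[C]_(m,n)) (B : 'M[C]_(n,p)) :
  adj (A *m B) = adj B *m adj A.
Proof. by rewrite /adj map_mxM trmx_mul. Qed.

Lemma adjK m n (A : 'M[C]_(m,n)) : adj (adj A) = A.
Proof. by apply/matrixP => i j; rewrite !adjE conjCK. Qed.

Lemma conjR (r : R) : ((RC r))^* = (RC r) :> C.
Proof. by apply: conj_Creal; apply/complex_realP; exists r. Qed.

Definition nsq p (x : 'cV[C]_p) : C := \sum_i x i 0 * (x i 0)^*.

Lemma nsq_ge0 p (x : 'cV[C]_p) : 0 <= nsq x.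
Proof. by apply: sumr_ge0 => i _; apply: mul_conjC_ge0. Qed.

Lemma nsqE p (x : 'cV[C]_p) : (adj x *m x) 0 0 = nsq x.
Proof. by rewrite mxE; apply: eq_bigr => i _; rewrite adjE mulrC. Qed.

Lemma nsq_conj p (x : 'cV[C]_p) : (nsq x)^* = nsq x.
Proof.
rewrite /nsq rmorph_sum; apply: eq_bigr => i _.
by rewrite rmorphM /= conjCK mulrC.
Qed.

Definition sq p (x : 'cV[C]_p) : R :=
  \sum_(i < p) ((complex.Re (x i 0)) ^+ 2 + (complex.Im (x i 0)) ^+ 2).

Lemma sqE p (x : 'cV[C]_p) : (RC (sq x)) = nsq x.
Proof.
rewrite /sq /nsq rmorph_sum; apply: eq_bigr => i _.
by rewrite /= add_Re2_Im2 normCK.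
Qed.

Lemma sq_ge0 p (x : 'cV[C]_p) : 0 <= sq x.
Proof. by rewrite -lecR sqE nsq_ge0. Qed.

Lemma vnormE p (x : 'cV[C]_p) : vnorm x = Num.sqrt (sq x).
Proof. by []. Qed.

Lemma vnorm_ge0 p (x : 'cV[C]_p) : 0 <= vnorm x.
Proof. by rewrite vnormE sqrtr_ge0. Qed.

Lemma vnorm_le p q (x : 'cV[C]_p) (y : 'cV[C]_q) (mu : R) : 0 <= mu ->
  nsq x <= (RC (mu ^+ 2)) * nsq y -> vnorm x <= mu * vnorm y.
Proof.
move=> mu0; rewrite -!sqE -rmorphM lecR => h.
rewrite !vnormE -[mu in mu * _](ger0_norm mu0) -sqrtr_sqr -sqrtrM ?sqr_ge0 //.
by rewrite ler_sqrt // mulr_ge0 ?sqr_ge0 ?sq_ge0.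
Qed.

Lemma vnorm_eq p q (x : 'cV[C]_p) (y : 'cV[C]_q) (mu : R) : 0 <= mu ->
  nsq x = (RC (mu ^+ 2)) * nsq y -> vnorm x = mu * vnorm y.
Proof.
move=> mu0; rewrite -!sqE -rmorphM => /complexI h.
by rewrite !vnormE h sqrtrM ?sqr_ge0 // sqrtr_sqr ger0_norm.
Qed.

Lemma nsqZ p (x : 'cV[C]_p) (a : R) : nsq ((RC a) *: x) = (RC (a ^+ 2)) * nsq x.
Proof.
rewrite /nsq mulr_sumr; apply: eq_bigr => i _.
by rewrite mxE rmorphM /= conjR; ring.
Qed.

Lemma nsq_expand p (y u : 'cV[C]_p) (mu : R) :
  nsq ((RC mu) *: y - u) = (RC (mu ^+ 2)) * nsq y
     - (RC mu) * ((adj y *m u) 0 0 + ((adj y *m u) 0 0)^*) + nsq u.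
Proof.
rewrite /nsq mxE rmorph_sum -big_split /= mulr_sumr mulr_sumr -sumrB -big_split /=.
apply: eq_bigr => i _.
by rewrite !mxE rmorphB !rmorphM /= conjR conjCK; ring.
Qed.

Lemma sq_bound p (y u : 'cV[C]_p) (mu : R) : 0 <= mu ->
  ((adj y *m u) 0 0)^* = (adj y *m u) 0 0 ->
  nsq u <= (RC mu) * (adj y *m u) 0 0 ->
  nsq u <= (RC (mu ^+ 2)) * nsq y.
Proof.
move=> mu0 tr h; have := nsq_ge0 ((RC mu) *: y - u); rewrite nsq_expand tr.
rewrite -subr_ge0 in h => h2; have := addr_ge0 h2 (addr_ge0 h h).
move=> h3; rewrite -subr_ge0; apply: le_trans h3 _.
by rewrite le_eqVlt; apply/orP; left; apply/eqP; ring.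
Qed.

End Gen.


Section B.
Variable R : realType.
Local Notation C := R[i].
Local Notation RC := (real_complex R).

Lemma vnorm0 p : vnorm (0 : 'cV[C]_p) = 0.
Proof.
rewrite vnormE /sq big1 ?sqrtr0 // => i _.
by rewrite mxE /= expr0n /= addr0.
Qed.

Lemma opnorm_le b p (A : 'M[C]_p) mu : 0 <= mu ->
  (forall x, nsq (A *m x) <= RC (mu ^+ 2) * nsq x) -> opnorm b A <= mu.
Proof.
move=> mu0 h; rewrite /opnorm; apply: ge_sup.
  exists (vnorm (A *m 0)); exists 0 => //; split; last by rewrite vnorm0.
  by apply/forallP => i; rewrite /inF mxE real0 orbT.
move=> _ [x [_ hx] <-]; apply: le_trans (vnorm_le mu0 (h x)) _.
by rewrite -[X in _ <= X]mulr1 ler_wpM2l.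
Qed.

Lemma opnorm_ge b p (A : 'M[C]_p) M mu x : 0 <= M ->
  (forall x, nsq (A *m x) <= RC (M ^+ 2) * nsq x) ->
  vecF b x -> vnorm x <= 1 -> mu <= vnorm (A *m x) -> mu <= opnorm b A.
Proof.
move=> M0 h vx nx le; apply: le_trans le _; rewrite /opnorm.
apply: ub_le_sup; last by exists x.
exists M => _ [y [_ hy] <-]; apply: le_trans (vnorm_le M0 (h y)) _.
by rewrite -[X in _ <= X]mulr1 ler_wpM2l.
Qed.

Lemma adj_diagS n (S : {set 'I_n}) : adj (diagS R S) = diagS R S.
Proof.
apply/matrixP => i j; rewrite adjE /diagS !mxE eq_sym.
case: eqP => [->|_]; rewrite ?mulr0n ?mulr1n ?conjC0 //.
by case: (j \in S); rewrite ?conjC0 ?conjC1.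
Qed.

Lemma diagS_idem n (S : {set 'I_n}) : diagS R S *m diagS R S = diagS R S.
Proof.
rewrite /diagS mulmx_diag; congr diag_mx; apply/rowP => i; rewrite !mxE.
by case: (i \in S); rewrite ?mulr1 ?mulr0.
Qed.

Lemma diagS_col n (S : {set 'I_n}) (z : 'cV[C]_n) i :
  (diagS R S *m z) i 0 = if i \in S then z i 0 else 0.
Proof.
by rewrite /diagS mul_diag_mx !mxE; case: (i \in S); rewrite ?mul1r ?mul0r.
Qed.

Lemma scaleE m n (a : C) (A : 'M[C]_(m, n)) i j : (a *: A) i j = a * A i j.
Proof. by rewrite mxE. Qed.
Lemma addE m n (A B : 'M[C]_(m, n)) i j : (A + B) i j = A i j + B i j.
Proof. by rewrite mxE. Qed.

Lemma core_bound n k (V : 'M[C]_(n, k)) (Q : 'M[C]_n) (S : {set 'I_n})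
    (a c nu : R) :
  V *m adj V = (RC a)%:M + RC c *: Q ->
  0 <= a + c * nu ->
  (forall w : 'cV[C]_n, diagS R S *m w = w ->
      (adj w *m Q *m w) 0 0 <= RC nu * nsq w) -> 0 <= c ->
  forall y, nsq ((adj V *m diagS R S *m V) *m y)
            <= RC ((a + c * nu) ^+ 2) * nsq y.
Proof.
move=> hP mu0 hQ c0 y.
set D := diagS R S; set w := D *m (V *m y).
have hu : (adj V *m D *m V) *m y = adj V *m w by rewrite /w !mulmxA.
apply: sq_bound => //; rewrite hu.
- have -> : adj y *m (adj V *m w) = adj w *m w.
    by rewrite /w !adjM adj_diagS -!mulmxA [D *m (D *m _)]mulmxA diagS_idem.
  by rewrite nsqE nsq_conj.
have -> : adj y *m (adj V *m w) = adj w *m w.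
  by rewrite /w !adjM adj_diagS -!mulmxA [D *m (D *m _)]mulmxA diagS_idem.
rewrite nsqE -[nsq (adj V *m w)]nsqE.
rewrite adjM adjK mulmxA -[adj w *m V *m _]mulmxA hP.
have -> : adj w *m ((RC a)%:M + RC c *: Q) *m w
   = RC a *: (adj w *m w) + RC c *: (adj w *m Q *m w).
  by rewrite mulmxDr mulmxDl mul_mx_scalar -scalemxAr -!scalemxAl.
rewrite addE !scaleE nsqE.
have hw : D *m w = w by rewrite /w mulmxA diagS_idem.
have := hQ w hw => h.
rewrite !rmorphD !rmorphM /= mulrDl -mulrA lerD2l.
by rewrite ler_wpM2l // ler0c.
Qed.

End B.


Section Cc.
Variable R : realType.
Local Notation C := R[i].
Local Notation RC := (real_complex R).

Definition Nc (z : C) := z * z^*.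
Definition nr (z : C) : R := complex.Re z ^+ 2 + complex.Im z ^+ 2.
Lemma NcE z : Nc z = RC (nr z).
Proof. by rewrite /Nc /nr add_Re2_Im2 normCK. Qed.
Lemma Nc_ge0 z : 0 <= Nc z. Proof. exact: mul_conjC_ge0. Qed.
Lemma nr_ge0 z : 0 <= nr z. Proof. by rewrite -ler0c -NcE Nc_ge0. Qed.
Lemma NcM x y : Nc (x * y) = Nc x * Nc y.
Proof. by rewrite /Nc rmorphM /=; ring. Qed.

Lemma Nc2 x y : Nc (x + y) <= 2%:R * (Nc x + Nc y).
Proof.
rewrite -subr_ge0; apply: le_trans (Nc_ge0 (x - y)) _.
by rewrite le_eqVlt; apply/orP; left; apply/eqP; rewrite /Nc !rmorphB !rmorphD /=; ring.
Qed.

Lemma Nc3 x y z : Nc (x + y + z) <= 3%:R * (Nc x + Nc y + Nc z).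
Proof.
rewrite -subr_ge0; apply: le_trans (addr_ge0 (addr_ge0 (Nc_ge0 (x - y)) (Nc_ge0 (y - z)))
  (Nc_ge0 (x - z))) _.
by rewrite le_eqVlt; apply/orP; left; apply/eqP; rewrite /Nc !rmorphB !rmorphD /=; ring.
Qed.

Variables (n : nat) (Q : 'M[C]_n) (S : {set 'I_n}) (w : 'cV[C]_n).
Hypotheses (herm : forall i j, Q j i = (Q i j)^*) (diag0 : forall i, Q i i = 0)
  (unim : forall i j, i != j -> Q i j * (Q i j)^* = 1)
  (supp : forall i, i \notin S -> w i 0 = 0).

Local Notation x i := (w i 0).
Definition T i j := Nc (x i - Q i j * x j).
Definition F := \sum_(i in S) \sum_(j in S | j != i) T i j.
Definition q := (adj w *m Q *m w) 0 0.

Lemma qE : q = \sum_i \sum_j (x i)^* * Q i j * x j.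
Proof.
rewrite /q mxE exchange_big /=; apply: eq_bigr => j _.
by rewrite mxE mulr_suml; apply: eq_bigr => i _; rewrite adjE.
Qed.

Lemma q_conj : q^* = q.
Proof.
have hQ : adj Q = Q by apply/matrixP => i j; rewrite adjE -herm.
rewrite /q -[_^*]adjE !adjM adjK hQ mulmxA.
done.
Qed.

Lemma nsqS : nsq w = \sum_(i in S) Nc (x i).
Proof.
rewrite /nsq [RHS]big_mkcond /=; apply: eq_bigr => i _.
by case: ifP => // /negbT /supp ->; rewrite mul0r.
Qed.

Lemma sum_offdiag (g : 'I_n -> 'I_n -> C) :
  (forall i j, (i \notin S) || (j \notin S) || (i == j) -> g i j = 0) ->
  \sum_(i in S) \sum_(j in S | j != i) g i j = \sum_i \sum_j g i j.
Proof.
move=> hg; rewrite big_mkcond /=; apply: eq_bigr => i _.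
case: ifP => iS; last by rewrite big1 // => j _; apply: hg; rewrite iS.
rewrite big_mkcond /=; apply: eq_bigr => j _.
case: ifP => // /negbT; rewrite negb_and negbK => h; apply/esym/hg.
by case/orP: h => h; [rewrite h orbT | rewrite (eqP h) eqxx orbT].
Qed.

Lemma sum_neq (g : 'I_n -> C) i : i \in S ->
  \sum_(j in S | j != i) g j = \sum_(j in S) g j - g i.
Proof. by move=> iS; rewrite [\sum_(j in S) _](bigD1 i) //= addrC addrK. Qed.

Lemma F_eq : F = (nsq w *+ #|S| - nsq w) *+ 2 - (q + q^*).
Proof.
have hT : forall i j, j != i -> T i j = (Nc (x i) + Nc (x j))
    - ((x i)^* * Q i j * x j + ((x i)^* * Q i j * x j)^*).
  move=> i j ji; have := unim (i:=i) (j:=j); rewrite eq_sym ji => /(_ isT) u.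
  rewrite /T /Nc rmorphB !rmorphM /= conjCK.
  transitivity (x i * (x i)^* + (Q i j * (Q i j)^*) * (x j * (x j)^*)
     - ((x i)^* * Q i j * x j + x i * (Q i j)^* * (x j)^*)); first by ring.
  by rewrite u mul1r.
rewrite /F (eq_bigr (fun i => \sum_(j in S | j != i) ((Nc (x i) + Nc (x j))
    - ((x i)^* * Q i j * x j + ((x i)^* * Q i j * x j)^*)))); last first.
  by move=> i _; apply: eq_bigr => j /andP [_ ji]; rewrite hT.
rewrite (eq_bigr (fun i => \sum_(j in S | j != i) (Nc (x i) + Nc (x j))
    - \sum_(j in S | j != i) ((x i)^* * Q i j * x j + ((x i)^* * Q i j * x j)^*)));
  last by move=> i _; rewrite sumrB.
rewrite sumrB [X in _ - X]sum_offdiag; last first.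
  move=> i j /orP [/orP [] h|/eqP ->]; first by rewrite supp // conjC0 !mul0r conjC0 addr0.
    by rewrite (supp h) !mulr0 conjC0 addr0.
  by rewrite diag0 mulr0 mul0r conjC0 addr0.
have -> : \sum_i \sum_j ((x i)^* * Q i j * x j + ((x i)^* * Q i j * x j)^*)
   = q + q^*.
  rewrite qE rmorph_sum -big_split /=; apply: eq_bigr => i _.
  by rewrite rmorph_sum -big_split.
congr (_ - _).
rewrite (eq_bigr (fun i => (Nc (x i) *+ #|S| - Nc (x i)) + (nsq w - Nc (x i)))).
  by rewrite big_split /= sumrB sumrB sumr_const sumrMnl -nsqS; rewrite mulr2n.
move=> i iS; rewrite big_split /= !sum_neq // sumr_const -nsqS.
done.
Qed.

Lemma F_ge0 : 0 <= F.
Proof. by apply: sumr_ge0 => i _; apply: sumr_ge0 => j _; apply: Nc_ge0. Qed.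

Lemma F_ge_T p r : p \in S -> r \in S -> r != p -> T p r <= F.
Proof.
move=> pS rS rp; rewrite /F (bigD1 p) //= (bigD1 r) /=; last by rewrite rS rp.
rewrite -addrA lerDl; apply: addr_ge0; apply: sumr_ge0 => i _ //.
  exact: Nc_ge0.
by apply: sumr_ge0 => j _; apply: Nc_ge0.
Qed.

Lemma form_bound : q <= (#|S|%:R - 1) * nsq w.
Proof.
have := F_ge0; rewrite F_eq q_conj subr_ge0 -mulr2n lerMn2r /=.
by rewrite mulrBl mul1r mulr_natl.
Qed.

Lemma realE (z : C) : z \is Num.real -> z = RC (complex.Re z).
Proof. by move=> h; rewrite RRe_real. Qed.

Lemma NcN z : Nc (- z) = Nc z.
Proof. by rewrite /Nc rmorphN /=; ring. Qed.

Lemma NcQ i j z : i != j -> Nc (Q i j * z) = Nc z.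
Proof. by move=> ij; rewrite NcM /Nc unim // mul1r. Qed.

Lemma arith (d m Fr xr nw qr : R) : 0 < d -> 0 < m -> 0 <= Fr -> 0 <= xr ->
  d * xr <= 9%:R * Fr -> nw <= m * (2%:R * (Fr + xr)) ->
  Fr = (nw * m - nw) * 2%:R - 2%:R * qr ->
  qr <= (m - 1 - d / (4%:R * m * (d + 9%:R))) * nw.
Proof.
move=> d0 m0 F0 x0 h1 h2 h3.
have K0 : 0 < 4%:R * m * (d + 9%:R) by rewrite !mulr_gt0 // ?ltr0n // addr_gt0 // ltr0n.
have s1 : d * nw <= d * (m * (2%:R * (Fr + xr))) by rewrite ler_wpM2l // ltW.
have s2 : m * (d * xr) <= m * (9%:R * Fr) by rewrite ler_wpM2l // ltW.
have qeq : qr = nw * m - nw - Fr / 2%:R.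
  by rewrite h3; field.
set K := 4%:R * m * (d + 9%:R) in K0 *.
suff H : K * qr <= K * ((m - 1 - d / K) * nw) by rewrite ler_pM2l in H.
have -> : K * ((m - 1 - d / K) * nw) = K * (m - 1) * nw - d * nw.
  by field; rewrite gt_eqF.
rewrite /K.
rewrite qeq; nra.
Qed.

Lemma gap (i0 j0 a : 'I_n) : i0 \in S -> j0 \in S -> a \in S ->
  i0 != j0 -> i0 != a -> a != j0 ->
  Q i0 j0 != Q i0 a * Q a j0 ->
  q <= RC (#|S|%:R - 1 - nr (Q i0 j0 - Q i0 a * Q a j0) /
            (4%:R * #|S|%:R * (nr (Q i0 j0 - Q i0 a * Q a j0) + 9%:R))) * nsq w.
Proof.
move=> iS jS aS ij ia aj dne.
set d := Q i0 j0 - Q i0 a * Q a j0.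
have h1 : Nc d * Nc (x j0) <= 9%:R * F.
  rewrite -NcM.
  have -> : d * x j0 = (x i0 - Q i0 a * x a) + Q i0 a * (x a - Q a j0 * x j0)
       - (x i0 - Q i0 j0 * x j0) by rewrite /d; ring.
  apply: le_trans (Nc3 _ _ _) _; rewrite NcN NcQ //.
  have t1 : T i0 a <= F by apply: F_ge_T; rewrite // eq_sym.
  have t2 : T a j0 <= F by apply: F_ge_T; rewrite // eq_sym.
  have t3 : T i0 j0 <= F by apply: F_ge_T; rewrite // eq_sym.
  have -> : (9%:R : C) = 3%:R * 3%:R by rewrite -natrM.
  rewrite -mulrA ler_wpM2l ?ler0n //.
  have -> : (3%:R : C) * F = F + F + F by rewrite mulr_natl !mulrS mulr0n addr0 addrA.
  by rewrite !lerD.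
have h2 : forall l, l \in S -> Nc (x l) <= 2%:R * (F + Nc (x j0)).
  move=> l lS; case: (eqVneq l j0) => [->|lj].
    apply: (@le_trans _ _ (F + Nc (x j0))); first by rewrite lerDr F_ge0.
    by rewrite mulr_natl mulr2n lerDl addr_ge0 ?F_ge0 ?Nc_ge0.
  have -> : x l = (x l - Q l j0 * x j0) + Q l j0 * x j0 by ring.
  apply: le_trans (Nc2 _ _) _; rewrite NcQ // ler_wpM2l ?ler0n // lerD2r.
  by apply: F_ge_T => //; rewrite eq_sym.
have h3 : nsq w <= #|S|%:R * (2%:R * (F + Nc (x j0))).
  by rewrite nsqS mulr_natl -sumr_const; apply: ler_sum => l lS; apply: h2.
have hF := F_eq; rewrite q_conj in hF.
have rF : F \is Num.real by apply: ger0_real; apply: F_ge0.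
have rq : q \is Num.real by apply/CrealP; apply: q_conj.
have rn : nsq w \is Num.real by apply: ger0_real; apply: nsq_ge0.
move: h1 h2 h3 hF; rewrite (realE rF) (realE rq) (realE rn) !NcE.
move=> h1 _ h3 hF.
rewrite -rmorphM lecR.
have F0 := F_ge0; rewrite (realE rF) ler0c in F0.
apply: (@arith (nr d) #|S|%:R (complex.Re F) (nr (x j0))) => //.
- rewrite lt_def nr_ge0 andbT; apply: contra dne => /eqP d0.
  have : Nc d = 0 by rewrite NcE d0.
  by move/eqP; rewrite /Nc mulf_eq0 conjC_eq0 orbb /d subr_eq0.
- by rewrite ltr0n card_gt0; apply/set0Pn; exists i0.
- exact: nr_ge0.
- by move: h1; rewrite -rmorphM -(rmorph_nat (real_complex R)) -rmorphM lecR.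
- rewrite -lecR; apply: le_trans h3 _.
  by rewrite !(rmorphM (real_complex R)) !(rmorphD (real_complex R)) !(rmorph_nat (real_complex R)).
- apply: complexI; rewrite hF.
  rewrite !(rmorphB (real_complex R), rmorphM (real_complex R), rmorph_nat (real_complex R)) /=.
  ring.
Qed.

End Cc.


Section D.
Variable R : realType.
Local Notation C := R[i].
Local Notation RC := (real_complex R).

Lemma inv_of p (A B : 'M[C]_p) : A *m B = 1%:M -> invmx A = B.
Proof.
move=> AB; have [uA _] := mulmx1_unit AB.
by rewrite -[RHS](mulKmx uA) AB mulmx1.
Qed.

Lemma unit_norm (z : C) : `|z| = 1 -> z * z^* = 1.
Proof. by move=> h; rewrite -normCK h expr1n. Qed.

Lemma norm_unit (z : C) : z * z^* = 1 -> `|z| = 1.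
Proof.
move=> h; apply/eqP; rewrite -sqrp_eq1 ?normr_ge0 //.
by rewrite normCK h.
Qed.

Lemma inv_diag p (d : 'rV[C]_p) : (forall i, d 0 i * (d 0 i)^* = 1) ->
  invmx (diag_mx d) = diag_mx (\row_i (d 0 i)^*).
Proof.
move=> hd; apply: inv_of; rewrite mulmx_diag; apply/matrixP => i j.
by rewrite !mxE hd.
Qed.

Lemma JmIE m (i j : 'I_m) : JmI R m i j = if i == j then 0 else 1.
Proof. by rewrite /JmI !mxE; case: (i == j); rewrite /= ?subrr ?subr0. Qed.

Lemma switch_entries m (M : 'M[C]_m) : switching_equiv M (JmI R m) ->
  exists e : 'I_m -> C, (forall i, e i * (e i)^* = 1) /\
    (forall i j, i != j -> M i j = e i * (e j)^*).
Proof.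
case=> p [d [hd ->]].
have hd' : forall i, d 0 i * (d 0 i)^* = 1 by move=> i; apply: unit_norm.
have hP : invmx (perm_mx p : 'M[C]_m) = perm_mx p^-1.
  by apply: inv_of; rewrite -perm_mxM mulgV perm_mx1.
rewrite inv_diag // hP.
exists (fun i => d 0 (p i)); split => // i j ij.
rewrite -!mulmxA -row_permE mulmxA mulmxA.
rewrite -[_ *m perm_mx p^-1]col_permE.
rewrite !mxE (bigD1 (p j)) //= big1 ?addr0; last first.
  by move=> l /negbTE hl; rewrite !mxE hl mulr0n mulr0.
rewrite mul_diag_mx !mxE eqxx mulr1n.
have -> : (p i == p j) = false by apply/negbTE; rewrite (inj_eq perm_inj).
by rewrite subr0 mulr1.
Qed.

Lemma switch_of_cons m (M : 'M[C]_m) (o : 'I_m) :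
  (forall i j, M j i = (M i j)^*) -> (forall i, M i i = 0) ->
  (forall i j, i != j -> M i j * (M i j)^* = 1) ->
  (forall i j, i != o -> j != o -> i != j -> M i j = M i o * M o j) ->
  switching_equiv M (JmI R m).
Proof.
move=> herm d0 un cons.
pose d := \row_i (if i == o then 1 else M i o).
have hd : forall i, d 0 i * (d 0 i)^* = 1.
  move=> i; rewrite mxE; case: eqP => [_|/eqP io]; first by rewrite conjC1 mulr1.
  exact: un.
exists 1%g, d; split; first by move=> i; apply: norm_unit.
rewrite perm_mx1 invmx1 mul1mx mulmx1 inv_diag //.
apply/matrixP => i j; rewrite mul_mx_diag mul_diag_mx !mxE.
case: (eqVneq i j) => [->|ij]; first by rewrite d0 mulr1n subrr mulr0 mul0r.
rewrite mulr0n subr0 mulr1.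
case: (eqVneq i o) => [eio|io]; case: (eqVneq j o) => [ejo|jo].
- by move: ij; rewrite eio ejo eqxx.
- by rewrite eio mul1r -herm.
- by rewrite ejo conjC1 mulr1.
by rewrite -herm cons.
Qed.

End D.


Section E.
Variable R : realType.
Local Notation C := R[i].
Local Notation RC := (real_complex R).
Variables (n k : nat) (V : 'M[C]_(n, k)) (Q : 'M[C]_n) (a c : R).
Hypotheses (hP : V *m adj V = (RC a)%:M + RC c *: Q) (a0 : 0 < a) (c0 : 0 < c)
  (herm : forall i j, Q j i = (Q i j)^*) (diag0 : forall i, Q i i = 0)
  (unim : forall i j, i != j -> Q i j * (Q i j)^* = 1).

Definition Aop (S : {set 'I_n}) := adj V *m diagS R S *m V.

Lemma supp_of (S : {set 'I_n}) (w : 'cV[C]_n) : diagS R S *m w = w ->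
  forall i, i \notin S -> w i 0 = 0.
Proof. by move=> hw i iS; rewrite -hw diagS_col (negbTE iS). Qed.

Lemma upper (S : {set 'I_n}) : (0 < #|S|)%N -> forall y,
  nsq (Aop S *m y) <= RC ((a + c * (#|S|%:R - 1)) ^+ 2) * nsq y.
Proof.
move=> S0 y; apply: (core_bound hP).
- apply: addr_ge0; [exact: ltW | apply: mulr_ge0; [exact: ltW | by rewrite subr_ge0 ler1n]].
- move=> w hw; have := form_bound herm diag0 unim (supp_of hw).
  by rewrite rmorphB rmorph_nat rmorph1.
- exact: ltW.
Qed.

Lemma Dnorm_le b (S : {set 'I_n}) : (0 < #|S|)%N ->
  opnorm b (Aop S) <= a + c * (#|S|%:R - 1).
Proof.
move=> S0; apply: opnorm_le; last exact: upper.
apply: addr_ge0; [exact: ltW | apply: mulr_ge0; [exact: ltW | by rewrite subr_ge0 ler1n]].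
Qed.

Lemma nr_gt0 (z : C) : z != 0 -> 0 < nr z.
Proof.
move=> z0; rewrite lt_def nr_ge0 andbT; apply: contra z0 => /eqP d0.
have : Nc z = 0 by rewrite NcE d0.
by move/eqP; rewrite /Nc mulf_eq0 conjC_eq0 orbb.
Qed.

Lemma gap_le b (S : {set 'I_n}) i0 j0 a' : i0 \in S -> j0 \in S -> a' \in S ->
  i0 != j0 -> i0 != a' -> a' != j0 -> Q i0 j0 != Q i0 a' * Q a' j0 ->
  opnorm b (Aop S) < a + c * (#|S|%:R - 1).
Proof.
move=> iS jS aS ij ia aj dne.
set d := nr (Q i0 j0 - Q i0 a' * Q a' j0).
have d0 : 0 < d by apply: nr_gt0; rewrite subr_eq0.
have m2 : (2 <= #|S|)%N.
  have <- : #|[set i0; a']| = 2%N by rewrite cards2 ia.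
  by apply: subset_leq_card; apply/fintype.subsetP => l; rewrite !inE => /orP [] /eqP ->.
have m2' : (2%:R : R) <= #|S|%:R by rewrite ler_nat.
set K := 4%:R * #|S|%:R * (d + 9%:R).
have K0 : 0 < K by rewrite /K; apply: mulr_gt0; [apply: mulr_gt0|]; lra.
have eps0 : 0 < d / K by rewrite divr_gt0.
have eps1 : d / K <= 1.
  by rewrite ler_pdivrMr // mul1r /K; nra.
set nu := #|S|%:R - 1 - d / K.
have mu0 : 0 <= a + c * nu.
  by apply: addr_ge0; [exact: ltW | apply: mulr_ge0; [exact: ltW | rewrite /nu; lra]].
apply: (@le_lt_trans _ _ (a + c * nu)).
  apply: opnorm_le => // y; apply: (core_bound hP) => //; last exact: ltW.
  move=> w hw; exact: (gap herm diag0 unim (supp_of hw) iS jS aS ij ia aj dne).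
by rewrite ltrD2l ltr_pM2l // /nu; lra.
Qed.

Lemma RC_real (r : R) : RC r \is Num.real.
Proof. by apply/complex_realP; exists r. Qed.

Lemma lower b (S : {set 'I_n}) (w : 'cV[C]_n) :
  (0 < #|S|)%N ->
  (forall i, i \notin S -> w i 0 = 0) ->
  (forall l, l \in S -> (Q *m w) l 0 = (#|S|%:R - 1) * w l 0) ->
  0 < nsq w ->
  (b = false -> (forall i j, V i j \is Num.real) /\ (forall l, w l 0 \is Num.real)) ->
  a + c * (#|S|%:R - 1) <= opnorm b (Aop S).
Proof.
move=> S0 supp hQw hw0 hreal.
set lam := a + c * (#|S|%:R - 1).
have lam0 : 0 < lam.
  have h : 0 <= c * (#|S|%:R - 1).
    by apply: mulr_ge0; [exact: ltW | by rewrite subr_ge0 ler1n].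
  by apply: (lt_le_trans a0); rewrite lerDl.
set D := diagS R S.
have hDw : D *m w = w.
  apply/matrixP => i j; rewrite (ord1 j) diagS_col; case: ifP => // /negbT /supp ->.
  done.
have hDP : D *m (V *m adj V *m w) = RC lam *: w.
  apply/matrixP => i j; rewrite (ord1 j) diagS_col hP mulmxDl mul_scalar_mx -scalemxAl.
  rewrite addE !scaleE; case: ifP => iS.
    by rewrite hQw // /lam rmorphD rmorphM rmorphB rmorph_nat rmorph1 /=; ring.
  by rewrite (supp _ (negbT iS)) !mulr0.
set y := adj V *m w.
have hAy : Aop S *m y = RC lam *: y.
  by rewrite /Aop /y -!mulmxA [V *m (adj V *m w)]mulmxA hDP scalemxAr.
have hny : nsq y = RC lam * nsq w.
  rewrite -nsqE /y adjM adjK -mulmxA [V *m (adj V *m w)]mulmxA.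
  by rewrite -{1}hDw adjM adj_diagS -mulmxA hDP -scalemxAr scaleE nsqE.
have sqy : 0 < sq y.
  by rewrite -ltcR rmorph0 sqE hny mulr_gt0 // -[0](rmorph0 (real_complex R)) ltcR.
set vy := vnorm y.
have vy0 : 0 < vy by rewrite /vy vnormE sqrtr_gt0.
set x := RC vy^-1 *: y.
have nx : vnorm x = 1.
  rewrite (@vnorm_eq _ _ _ x y vy^-1) ?invr_ge0 ?ltW // ?mulVf ?gt_eqF //.
  by rewrite /x nsqZ.
have Ax : Aop S *m x = RC lam *: x.
  by rewrite /x -scalemxAr hAy !scalerA mulrC.
apply: (@opnorm_ge _ b _ (Aop S) lam lam x (ltW lam0) (upper S0)) => //.
- case: b hreal => hreal; first by apply/forallP.
  have [hV hw] := hreal erefl; apply/forallP => i; rewrite /inF /=.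
  rewrite /x /y !mxE; apply: realM; first exact: RC_real.
  apply: sum_real => l _; apply: realM => //.
  by rewrite adjE conj_Creal.
- by rewrite nx.
rewrite Ax (@vnorm_eq _ _ _ _ x lam (ltW lam0)); first by rewrite nx mulr1.
by rewrite nsqZ.
Qed.

End E.

Unset Implicit Arguments. Set Strict Implicit.

Theorem corollary3p5 (R : realType) (b : bool) (n k : nat)
    (f : 'I_n -> 'cV[R[i]]_k) (Q : 'M[R[i]]_n) :
  (0 < k < n)%N ->
  parseval_frame b f ->
  uniform_c b f 2 ->
  seidel Q ->
  analysis f *m adj (analysis f)
    = (k%:R / n%:R)%:M + (real_complex R (cnk R n k)) *: Q ->
  forall m : nat, (1 <= m <= n)%N ->
    e_inf b f m <= k%:R / n%:R + (m - 1)%:R * cnk R n k /\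
    (e_inf b f m = k%:R / n%:R + (m - 1)%:R * cnk R n k <->
     exists s : 'I_m -> 'I_n, injective s /\
       switching_equiv (principal_sub Q s) (JmI R m)).
Proof.
move=> /andP [k0 kn] [vf hVV] _ [hadj [hdiag hnorm]] hP m /andP [m1 mn].
set V := analysis f.
set a : R := k%:R / n%:R.
set c := cnk R n k.
have n0 : (0 < n)%N by apply: leq_trans kn.
have a0 : 0 < a by rewrite /a divr_gt0 // ltr0n.
have c0 : 0 < c.
  rewrite /c /cnk sqrtr_gt0 divr_gt0 // ltr0n.
    by rewrite muln_gt0 k0 subn_gt0.
  by rewrite muln_gt0 expn_gt0 n0 subn_gt0 (leq_trans _ kn).
have hP' : V *m adj V = (real_complex R a)%:M + real_complex R c *: Q.
  by rewrite hP /a fmorph_div !rmorph_nat.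
have herm : forall i j, Q j i = (Q i j)^*.
  by move=> i j; rewrite -[in LHS]hadj adjE.
have unim : forall i j, i != j -> Q i j * (Q i j)^* = 1.
  by move=> i j ij; apply: unit_norm; apply: hnorm.
have -> : (m - 1)%:R * c = c * (m%:R - 1) by rewrite natrB // mulrC.
set lam := a + c * (m%:R - 1).
have hle : forall S : {set 'I_n}, #|S| = m -> Dnorm b f S <= lam.
  move=> S hS; rewrite /lam -hS.
  by apply: (Dnorm_le hP' a0 c0 herm hdiag unim); rewrite hS.
have lam0 : 0 < lam.
  have h : 0 <= c * (m%:R - 1).
    by apply: mulr_ge0; [exact: ltW | by rewrite subr_ge0 ler1n].
  by apply: (lt_le_trans a0); rewrite lerDl.
have hup : e_inf b f m <= lam.
  by rewrite /e_inf; apply: bigmax_le => [|S /eqP hS]; [exact: ltW | exact: hle].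
split => //.
have o_lt : (0 < m)%N by [].
pose o : 'I_m := Ordinal o_lt.
split.
- move=> heq.
  case: (boolP [exists S : {set 'I_n}, (#|S| == m) && (Dnorm b f S == lam)]);
    last first.
    move=> hno; exfalso.
    have : e_inf b f m < lam.
      rewrite /e_inf; apply: bigmax_lt => // S /eqP hS.
      rewrite lt_neqAle hle // andbT; apply: contra hno => hD.
      by apply/existsP; exists S; rewrite hS eqxx hD.
    by rewrite heq ltxx.
  move=> /existsP [S /andP [/eqP hS /eqP hD]].
  pose s := fun i : 'I_m => enum_val (cast_ord (esym hS) i).
  have sinj : injective s by move=> i j /enum_val_inj /cast_ord_inj.
  have sS : forall i, s i \in S by move=> i; apply: enum_valP.
  set M := principal_sub Q s.
  have ME : forall i j, M i j = Q (s i) (s j) by move=> i j; rewrite mxE.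
  case: (boolP [forall i, [forall j, (i != o) ==> (j != o) ==> (i != j) ==>
      (M i j == M i o * M o j)]]) => [hc|hnc].
    exists s; split => //; apply: (@switch_of_cons _ _ M o).
    - by move=> i j; rewrite !ME herm.
    - by move=> i; rewrite ME hdiag.
    - by move=> i j ij; rewrite ME unim // (inj_eq sinj).
    move=> i j io jo ij; move/forallP: hc => /(_ i) /forallP /(_ j).
    by rewrite io jo ij /= => /eqP.
  exfalso; move: hnc; rewrite negb_forall; case/existsP => i.
  rewrite negb_forall; case/existsP => j.
  rewrite !negb_imply => /andP [io /andP [jo /andP [ij hne]]].
  rewrite !ME in hne.
  have h : Dnorm b f S < a + c * (#|S|%:R - 1).
    apply: (gap_le hP' a0 c0 herm hdiag unim b (sS i) (sS j) (sS o)) => //.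
    - by rewrite (inj_eq sinj).
    - by rewrite (inj_eq sinj).
    - by rewrite (inj_eq sinj) eq_sym.
  by move: h; rewrite hS -/lam hD ltxx.
move=> [s [sinj hsw]].
have [e [he hMe]] := switch_entries hsw.
pose g i := e i * (e o)^*.
pose S := s @: [set: 'I_m].
have hS : #|S| = m by rewrite card_imset // cardsT card_ord.
pose w : 'cV[R[i]]_n := \col_l \sum_(i < m) (s i == l)%:R * g i.
have hwS : forall p, w (s p) 0 = g p.
  move=> p; rewrite mxE (bigD1 p) //= eqxx mul1r big1 ?addr0 // => i ip.
  by rewrite (inj_eq sinj) (negbTE ip) mul0r.
have hwN : forall l, l \notin S -> w l 0 = 0.
  move=> l hl; rewrite mxE big1 // => i _.
  have -> : (s i == l) = false.
    apply/negbTE; apply: contra hl => /eqP <-; apply/imsetP; exists i => //.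
  by rewrite mul0r.
have hQw : forall l, l \in S -> (Q *m w) l 0 = (#|S|%:R - 1) * w l 0.
  move=> l /imsetP [p _ ->]; rewrite hwS hS.
  have E1 : (Q *m w) (s p) 0 = \sum_(i < m) Q (s p) (s i) * g i.
    rewrite mxE (eq_bigr (fun l => \sum_(i < m) Q (s p) l * ((s i == l)%:R * g i)));
      last by move=> l2 _; rewrite mxE mulr_sumr.
    rewrite exchange_big /=; apply: eq_bigr => i _.
    rewrite (bigD1 (s i)) //= eqxx mul1r big1 ?addr0 // => l2 li.
    by rewrite eq_sym (negbTE li) mul0r mulr0.
  rewrite E1 (bigD1 p) //= hdiag mul0r add0r.
  rewrite (eq_bigr (fun _ => g p)); last first.
    move=> i ip; have := hMe p i; rewrite eq_sym ip => /(_ isT); rewrite mxE => ->.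
    rewrite /g; transitivity (e p * (e i * (e i)^*) * (e o)^*); first by ring.
    by rewrite he mulr1.
  have hc : \sum_(i < m) g p = g p + \sum_(i < m | i != p) g p by rewrite (bigD1 p).
  rewrite sumr_const card_ord in hc.
  by rewrite mulrBl mul1r mulr_natl hc addrC addKr.
have hgo : g o = 1 by rewrite /g he.
have hw0 : 0 < nsq w.
  rewrite /nsq (bigD1 (s o)) //= hwS hgo conjC1 mulr1.
  apply: (lt_le_trans ltr01); rewrite lerDl; apply: sumr_ge0 => l _.
  exact: mul_conjC_ge0.
have hlow : lam <= Dnorm b f S.
  rewrite /lam -hS.
  apply: (lower hP' a0 c0 herm hdiag unim); [by rewrite hS | exact: hwN | exact: hQw | exact: hw0 | ].
  move=> hb; rewrite hb in vf.
  have hVr : forall i j, V i j \is Num.real.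
    move=> i j; rewrite mxE CrealJ.
    by have := forallP (vf i) j; rewrite /inF.
  split => // l.
  have hQr : forall i j, i != j -> Q i j \is Num.real.
    move=> i j ij.
    have : (V *m adj V) i j \is Num.real.
      rewrite mxE; apply: sum_real => l' _; apply: realM => //.
      by rewrite adjE CrealJ.
    rewrite hP' addE scaleE mxE (negbTE ij) mulr0n add0r.
    by rewrite realMr ?RC_real // fmorph_eq0 gt_eqF.
  rewrite mxE; apply: sum_real => i _; apply: realM; first exact: realn.
  case: (eqVneq i o) => [->|io]; first by rewrite hgo real1.
  have := hMe i o io; rewrite mxE /g => <-.
  by apply: hQr; rewrite (inj_eq sinj).
have hge : lam <= e_inf b f m.
  apply: (le_trans hlow); rewrite /e_inf.
  by apply: (@le_bigmax_cond _ _ _ _ S (fun S : {set 'I_n} => #|S| == m)); rewrite hS.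
by apply/eqP; rewrite eq_le hup hge.
Qed.
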